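(* Let $G\subset\mathrm{SU}(2)$ be a finite nontrivial subgroup, $H=P(G)$, and let $f$ be an $H$-invariant Morse–Smale function on $S^2$ whose critical set equals the fixed-point set $\mathrm{Fix}(H)=\{p\in S^2: |H_p|>1\}$. Let $\varepsilon>0$ be small, $p$ a critical point of $f$, and $\gamma_p$ the embedded Reeb orbit of $\lambda_\varepsilon$ over $p$ (namely $t\mapsto e^{it/(1+\varepsilon f(p))}z$, $t\in[0,2\pi(1+\varepsilon f(p))]$, $z\in\mathfrak{P}^{-1}(p)$). Then the multiplicity of the Reeb orbit $\pi_G\circ\gamma_p$ of $\lambda_{G,\varepsilon}$ is $2|H_p|$ if $|G|$ is even, and $|H_p|$ if $|G|$ is odd.
   Context: $S^3\subset\mathbb{C}^2$ with $\lambda=\frac12\sum(x_kdy_k-y_kdx_k)|_{S^3}$; $\mathfrak{P}:S^3\to S^2$ the Hopf fibration; $P:\mathrm{SU}(2)\to\mathrm{SO}(3)$ the standard double cover (kernel $\{\pm\mathrm{Id}\}$); $H$ acts on $S^2$ by rotations, $H_p$ is the isotropy subgroup of $p$. $\lambda_\varepsilon=((1+\varepsilon f)\circ\mathfrak{P})\lambda$; $\pi_G:S^3\to S^3/G$ the quotient; $\lambda_{G,\varepsilon}$ is the contact form on $S^3/G$ with $\pi_G^*\lambda_{G,\varepsilon}=\lambda_\varepsilon$ (well defined since $f$ is $H$-invariant). The multiplicity of a Reeb orbit is the integer $m$ such that it is the $m$-fold iterate of an embedded Reeb orbit. *)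

(* Defs.v *)
From Stdlib Require Import Reals List Arith.
From Coquelicot Require Import Coquelicot.
Open Scope R_scope.

Definition C2 : Type := (C * C)%type.
Definition R3 : Type := (R * R * R)%type.

Definition cunit_sphere (z : C2) : Prop :=
  Cmod (fst z) ^ 2 + Cmod (snd z) ^ 2 = 1.

Definition dot3 (x y : R3) : R :=
  let '(x1, x2, x3) := x in let '(y1, y2, y3) := y in x1*y1 + x2*y2 + x3*y3.
Definition sphere2 (x : R3) : Prop := dot3 x x = 1.
Definition add3 (x y : R3) : R3 :=
  let '(x1, x2, x3) := x in let '(y1, y2, y3) := y in (x1+y1, x2+y2, x3+y3).
Definition scal3 (a : R) (x : R3) : R3 :=
  let '(x1, x2, x3) := x in (a*x1, a*x2, a*x3).

(** 2x2 complex matrices ((a, b), (c, d)) = [[a, b], [c, d]]. *)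
Definition Mat2 : Type := ((C * C) * (C * C))%type.
Definition mat_id : Mat2 := ((RtoC 1, RtoC 0), (RtoC 0, RtoC 1)).
Definition mat_mul (M N : Mat2) : Mat2 :=
  let '((a, b), (c, d)) := M in let '((a', b'), (c', d')) := N in
  ((Cplus (Cmult a a') (Cmult b c'), Cplus (Cmult a b') (Cmult b d')),
   (Cplus (Cmult c a') (Cmult d c'), Cplus (Cmult c b') (Cmult d d'))).
Definition mat_adj (M : Mat2) : Mat2 :=
  let '((a, b), (c, d)) := M in ((Cconj a, Cconj c), (Cconj b, Cconj d)).
Definition mat_det (M : Mat2) : C :=
  let '((a, b), (c, d)) := M in Cminus (Cmult a d) (Cmult b c).
Definition mat_vec (M : Mat2) (z : C2) : C2 :=
  let '((a, b), (c, d)) := M in let '(z1, z2) := z in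
  (Cplus (Cmult a z1) (Cmult b z2), Cplus (Cmult c z1) (Cmult d z2)).

Definition SU2 (g : Mat2) : Prop :=
  mat_mul (mat_adj g) g = mat_id /\ mat_det g = RtoC 1.

Definition card_is {T : Type} (A : T -> Prop) (n : nat) : Prop :=
  exists l : list T, NoDup l /\ (forall x, A x <-> In x l) /\ length l = n.

Definition finite_subgroup_SU2 (G : Mat2 -> Prop) : Prop :=
  (forall g, G g -> SU2 g) /\ G mat_id /\
  (forall g h, G g -> G h -> G (mat_mul g h)) /\
  (forall g, G g -> exists h, G h /\ mat_mul g h = mat_id) /\
  (exists n, card_is G n).

(** Identification R^3 = traceless Hermitian 2x2 matrices,
    x |-> [[x3, x1 - i x2], [x1 + i x2, -x3]]. *)
Definition herm (x : R3) : Mat2 :=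
  let '(x1, x2, x3) := x in
  ((RtoC x3, (x1, - x2)), ((x1, x2), RtoC (- x3))).
Definition vec_of_herm (M : Mat2) : R3 :=
  let '((a, b), (c, d)) := M in (Re c, Im c, Re a).

(** The standard double cover P : SU(2) -> SO(3), P(g) x = g X g^*. *)
Definition P (g : Mat2) : R3 -> R3 :=
  fun x => vec_of_herm (mat_mul (mat_mul g (herm x)) (mat_adj g)).

(** Hopf fibration S^3 -> S^2, z |-> 2 z z^* - Id (as a traceless Hermitian
    matrix); it satisfies hopf (g z) = P g (hopf z). *)
Definition hopf (z : C2) : R3 :=
  let '(z1, z2) := z in
  let outer : Mat2 := ((Cmult z1 (Cconj z1), Cmult z1 (Cconj z2)),
                       (Cmult z2 (Cconj z1), Cmult z2 (Cconj z2))) in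
  let '((a, b), (c, d)) := outer in
  vec_of_herm ((Cminus (Cmult (RtoC 2) a) (RtoC 1), Cmult (RtoC 2) b),
               (Cmult (RtoC 2) c, Cminus (Cmult (RtoC 2) d) (RtoC 1))).

(** Isotropy subgroup H_p of H = P(G) at p (elements are rotations). *)
Definition isotropy (G : Mat2 -> Prop) (p : R3) (r : R3 -> R3) : Prop :=
  exists g, G g /\ r = P g /\ r p = p.

Definition FixH (G : Mat2 -> Prop) (p : R3) : Prop :=
  sphere2 p /\ exists n, card_is (isotropy G p) n /\ (n > 1)%nat.

Definition sphere_critical (f : R3 -> R) (p : R3) : Prop :=
  sphere2 p /\
  forall v : R3, sphere2 v -> dot3 v p = 0 ->
    is_derive (fun t => f (add3 (scal3 (cos t) p) (scal3 (sin t) v))) 0 0.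

Definition rotC2 (s : R) (z : C2) : C2 :=
  let '(z1, z2) := z in (Cmult (cos s, sin s) z1, Cmult (cos s, sin s) z2).

(** The quotient map pi_G : S^3 -> S^3/G, a point of S^3/G being a G-orbit. *)
Definition piG (G : Mat2 -> Prop) (z : C2) : C2 -> Prop :=
  fun w => exists g, G g /\ w = mat_vec g z.

(** The closed orbit (x, T) (x of period T) has multiplicity m: it is the
    m-fold iterate of the embedded closed orbit (x, T/m), i.e. T/m is a period
    of x and x is injective on [0, T/m). *)
Definition multiplicity {X : Type} (x : R -> X) (T : R) (m : nat) : Prop :=
  (m > 0)%nat /\
  (forall t, x (t + T / INR m) = x t) /\
  (forall s t, 0 <= s < T / INR m -> 0 <= t < T / INR m -> x s = x t -> s = t).

(* Main.v *)
Require Import Defs.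
From Stdlib Require Import Reals List Arith.
From Stdlib Require Import Lra Lia ZArith.
From Stdlib Require Import Classical ClassicalEpsilon FunctionalExtensionality PropExtensionality.
From Coquelicot Require Import Coquelicot.
Open Scope R_scope.

Definition su4 (a1 a2 b1 b2 : R) : Mat2 :=
  (((a1, a2), (b1, b2)), ((- b1, b2), (a1, - a2))).

Ltac cunf := unfold mat_vec, mat_mul, mat_adj, mat_det, mat_id, su4, rotC2,
  P, herm, vec_of_herm, hopf, Cmult, Cplus, Cminus, Copp, Cconj, RtoC, Re, Im in *; simpl in *; cbn [fst snd] in *.

Ltac peq := repeat (apply pair_equal_spec; split); cbn [fst snd].

Lemma Ceq_diff (x y : C) : (x - y = 0)%C -> x = y.
Proof. destruct x as [x1 x2], y as [y1 y2]. unfold Cminus, Cplus, Copp, RtoC. simpl. intro H.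
  apply pair_equal_spec in H as [H1 H2]. f_equal; lra. Qed.

Lemma SU2_form g : SU2 g -> exists a1 a2 b1 b2, g = su4 a1 a2 b1 b2 /\
   a1*a1 + a2*a2 + b1*b1 + b2*b2 = 1.
Proof.
  destruct g as [[a b] [c d]].
  intros [H1 H2]. unfold mat_mul, mat_adj, mat_det, mat_id in *.
  apply pair_equal_spec in H1 as [H1 H1'].
  apply pair_equal_spec in H1 as [e11 e12].
  apply pair_equal_spec in H1' as [e21 e22].
  assert (Hd : Cconj a = d). { apply Ceq_diff.
    transitivity (-(Cconj a) * (a*d - b*c - 1) + (Cconj a * a + Cconj c * c - 1) * d
       - c * (Cconj a * b + Cconj c * d))%C; [ring|]. rewrite H2, e11, e12. ring. }
  assert (Hc : Cconj c = Copp b). { apply Ceq_diff.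
    transitivity (-(Cconj c) * (a*d - b*c - 1) + a * (Cconj a * b + Cconj c * d)
       - b * (Cconj a * a + Cconj c * c - 1))%C; [ring|]. rewrite H2, e11, e12. ring. }
  subst d. destruct a as [a1 a2], b as [b1 b2], c as [c1 c2].
  exists a1, a2, b1, b2. unfold su4. cunf.
  apply pair_equal_spec in Hc as [Hc1 Hc2].
  apply pair_equal_spec in e11 as [e11 _].
  split.
  - peq; lra.
  - nra.
Qed.

Definition nrm (w : C2) : R :=
  let '((x1, x2), (y1, y2)) := w in x1*x1 + x2*x2 + y1*y1 + y2*y2.
Definition mneg : Mat2 := ((RtoC (-1), RtoC 0), (RtoC 0, RtoC (-1))).

Lemma unit_nrm z : cunit_sphere z -> nrm z = 1.
Proof.
  destruct z as [[x1 x2] [y1 y2]]. unfold cunit_sphere, Cmod, nrm. cbn [fst snd].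
  rewrite !pow2_sqrt by nra. intro H. lra.
Qed.

Lemma vec_mul g h w : mat_vec (mat_mul g h) w = mat_vec g (mat_vec h w).
Proof.
  destruct g as [[[a1 a2] [b1 b2]] [[c1 c2] [d1 d2]]].
  destruct h as [[[e1 e2] [f1 f2]] [[g1 g2] [h1 h2]]].
  destruct w as [[x1 x2] [y1 y2]]. cunf. peq; ring.
Qed.

Lemma mul_assoc g h k : mat_mul (mat_mul g h) k = mat_mul g (mat_mul h k).
Proof.
  destruct g as [[[a1 a2] [b1 b2]] [[c1 c2] [d1 d2]]].
  destruct h as [[[e1 e2] [f1 f2]] [[g1 g2] [h1 h2]]].
  destruct k as [[[x1 x2] [y1 y2]] [[u1 u2] [v1 v2]]]. cunf. peq; ring.
Qed.

Lemma mul_id_l g : mat_mul mat_id g = g.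
Proof.
  destruct g as [[[a1 a2] [b1 b2]] [[c1 c2] [d1 d2]]]. cunf. peq; ring.
Qed.

Lemma vec_rot g t w : mat_vec g (rotC2 t w) = rotC2 t (mat_vec g w).
Proof.
  destruct g as [[[a1 a2] [b1 b2]] [[c1 c2] [d1 d2]]].
  destruct w as [[x1 x2] [y1 y2]]. cunf. peq; ring.
Qed.

Lemma vec_id w : mat_vec mat_id w = w.
Proof. destruct w as [[x1 x2] [y1 y2]]. cunf. peq; ring. Qed.

Lemma rot_add a b w : rotC2 a (rotC2 b w) = rotC2 (a + b) w.
Proof.
  destruct w as [[x1 x2] [y1 y2]]. cunf. rewrite cos_plus, sin_plus. peq; ring.
Qed.

Lemma rot0 w : rotC2 0 w = w.
Proof. destruct w as [[x1 x2] [y1 y2]]. cunf. rewrite cos_0, sin_0. peq; ring. Qed.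

Lemma su_SU2 a1 a2 b1 b2 : a1*a1 + a2*a2 + b1*b1 + b2*b2 = 1 -> SU2 (su4 a1 a2 b1 b2).
Proof. intro N. unfold SU2. cunf. split; peq; try ring; lra. Qed.

Lemma mul_adj_r g : SU2 g -> mat_mul g (mat_adj g) = mat_id.
Proof.
  intro H. destruct (SU2_form g H) as (a1 & a2 & b1 & b2 & -> & N). cunf. peq; nra.
Qed.

Lemma adj_SU2 g : SU2 g -> SU2 (mat_adj g).
Proof.
  intro H. destruct (SU2_form g H) as (a1 & a2 & b1 & b2 & -> & N).
  replace (mat_adj (su4 a1 a2 b1 b2)) with (su4 a1 (-a2) (-b1) (-b2)).
  - apply su_SU2. lra.
  - cunf. peq; ring.
Qed.

Lemma adj_adj g : mat_adj (mat_adj g) = g.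
Proof. destruct g as [[[a1 a2] [b1 b2]] [[c1 c2] [d1 d2]]]. cunf. peq; ring. Qed.

Lemma nrm_pres g w : SU2 g -> nrm (mat_vec g w) = nrm w.
Proof.
  intro H. destruct (SU2_form g H) as (a1 & a2 & b1 & b2 & -> & N).
  destruct w as [[x1 x2] [y1 y2]]. unfold nrm. cunf.
  transitivity ((a1*a1 + a2*a2 + b1*b1 + b2*b2) * (x1*x1 + x2*x2 + y1*y1 + y2*y2)); [ring|].
  rewrite N; ring.
Qed.

Lemma free g h z : SU2 g -> SU2 h -> nrm z = 1 -> mat_vec g z = mat_vec h z -> g = h.
Proof.
  intros Hg Hh Nz E.
  destruct (SU2_form g Hg) as (a1 & a2 & b1 & b2 & -> & N).
  destruct (SU2_form h Hh) as (c1 & c2 & d1 & d2 & -> & N').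
  destruct z as [[x1 x2] [y1 y2]]. unfold nrm in Nz. cunf.
  apply pair_equal_spec in E as [E1 E2].
  apply pair_equal_spec in E1 as [E1 E1'].
  apply pair_equal_spec in E2 as [E2 E2'].
  set (p1 := a1 - c1). set (p2 := a2 - c2). set (q1 := b1 - d1). set (q2 := b2 - d2).
  assert (F1 : p1 * x1 - p2 * x2 + q1 * y1 - q2 * y2 = 0) by (unfold p1,p2,q1,q2; lra).
  assert (F2 : p1 * x2 + p2 * x1 + q1 * y2 + q2 * y1 = 0) by (unfold p1,p2,q1,q2; lra).
  assert (F3 : - q1 * x1 - q2 * x2 + p1 * y1 + p2 * y2 = 0) by (unfold p1,p2,q1,q2; lra).
  assert (F4 : - q1 * x2 + q2 * x1 + p1 * y2 - p2 * y1 = 0) by (unfold p1,p2,q1,q2; lra).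
  assert (P1 : p1 = 0).
  { transitivity (p1 * (x1*x1 + x2*x2 + y1*y1 + y2*y2)); [rewrite Nz; ring|].
    transitivity (x1 * (p1 * x1 - p2 * x2 + q1 * y1 - q2 * y2) + x2 * (p1 * x2 + p2 * x1 + q1 * y2 + q2 * y1)
      + y1 * (- q1 * x1 - q2 * x2 + p1 * y1 + p2 * y2) + y2 * (- q1 * x2 + q2 * x1 + p1 * y2 - p2 * y1)); [ring|].
    rewrite F1, F2, F3, F4. ring. }
  assert (P2 : p2 = 0).
  { transitivity (p2 * (x1*x1 + x2*x2 + y1*y1 + y2*y2)); [rewrite Nz; ring|].
    transitivity (- x2 * (p1 * x1 - p2 * x2 + q1 * y1 - q2 * y2) + x1 * (p1 * x2 + p2 * x1 + q1 * y2 + q2 * y1)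
      + y2 * (- q1 * x1 - q2 * x2 + p1 * y1 + p2 * y2) - y1 * (- q1 * x2 + q2 * x1 + p1 * y2 - p2 * y1)); [ring|].
    rewrite F1, F2, F3, F4. ring. }
  assert (Q1 : q1 = 0).
  { transitivity (q1 * (x1*x1 + x2*x2 + y1*y1 + y2*y2)); [rewrite Nz; ring|].
    transitivity (y1 * (p1 * x1 - p2 * x2 + q1 * y1 - q2 * y2) + y2 * (p1 * x2 + p2 * x1 + q1 * y2 + q2 * y1)
      - x1 * (- q1 * x1 - q2 * x2 + p1 * y1 + p2 * y2) - x2 * (- q1 * x2 + q2 * x1 + p1 * y2 - p2 * y1)); [ring|].
    rewrite F1, F2, F3, F4. ring. }
  assert (Q2 : q2 = 0).
  { transitivity (q2 * (x1*x1 + x2*x2 + y1*y1 + y2*y2)); [rewrite Nz; ring|].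
    transitivity (- y2 * (p1 * x1 - p2 * x2 + q1 * y1 - q2 * y2) + y1 * (p1 * x2 + p2 * x1 + q1 * y2 + q2 * y1)
      - x2 * (- q1 * x1 - q2 * x2 + p1 * y1 + p2 * y2) + x1 * (- q1 * x2 + q2 * x1 + p1 * y2 - p2 * y1)); [ring|].
    rewrite F1, F2, F3, F4. ring. }
  unfold p1, p2, q1, q2 in *.
  assert (a1 = c1) by lra. assert (a2 = c2) by lra. assert (b1 = d1) by lra. assert (b2 = d2) by lra.
  subst. reflexivity.
Qed.

Definition hopfH (w : C2) : R3 :=
  let '((x1, x2), (y1, y2)) := w in
  (2 * (y1*x1 + y2*x2), 2 * (y2*x1 - y1*x2), x1*x1 + x2*x2 - y1*y1 - y2*y2).

Lemma hopf_H w : nrm w = 1 -> hopf w = hopfH w.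
Proof. destruct w as [[x1 x2] [y1 y2]]. unfold nrm, hopfH. intro N. cunf. peq; lra. Qed.

Lemma P_hopfH g w : SU2 g -> P g (hopfH w) = hopfH (mat_vec g w).
Proof.
  intro H. destruct (SU2_form g H) as (a1 & a2 & b1 & b2 & -> & N).
  destruct w as [[x1 x2] [y1 y2]]. unfold hopfH. cunf. peq; ring.
Qed.

Lemma hopfH_rot t w : hopfH (rotC2 t w) = hopfH w.
Proof.
  destruct w as [[x1 x2] [y1 y2]]. unfold hopfH. cunf.
  pose proof (sin2_cos2 t) as E. unfold Rsqr in E.
  peq; match goal with |- ?L = ?R =>
    transitivity ((sin t * sin t + cos t * cos t) * R); [ring | rewrite E; ring] end.
Qed.

Lemma arg_exists l1 l2 : l1*l1 + l2*l2 = 1 -> exists t, cos t = l1 /\ sin t = l2.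
Proof.
  intro N. assert (B : -1 <= l1 <= 1) by nra.
  destruct (Rle_or_lt 0 l2) as [Hp|Hn].
  - exists (acos l1). split; [apply cos_acos; auto|].
    rewrite sin_acos by auto. replace (1 - l1²) with (l2 * l2) by (unfold Rsqr; lra).
    apply sqrt_square; auto.
  - exists (- acos l1). rewrite cos_neg, sin_neg. split; [apply cos_acos; auto|].
    rewrite sin_acos by auto. replace (1 - l1²) with ((-l2) * (-l2)) by (unfold Rsqr; lra).
    rewrite sqrt_square; lra.
Qed.

Lemma hopf_inj w z : nrm w = 1 -> nrm z = 1 -> hopfH w = hopfH z -> exists t, w = rotC2 t z.
Proof.
  destruct w as [[u1 u2] [v1 v2]], z as [[x1 x2] [y1 y2]]. unfold nrm, hopfH.
  intros Nw Nz E.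
  apply pair_equal_spec in E as [E E3]. apply pair_equal_spec in E as [E1 E2].
  set (D1 := (y1*x1+y2*x2)-(v1*u1+v2*u2)). set (D2 := (y2*x1-y1*x2)-(v2*u1-v1*u2)).
  set (D3 := (x1*x1+x2*x2)-(u1*u1+u2*u2)).
  set (Nw' := u1*u1+u2*u2+v1*v1+v2*v2-1). set (Nz' := x1*x1+x2*x2+y1*y1+y2*y2-1).
  assert (ZD1 : D1 = 0) by (unfold D1; lra).
  assert (ZD2 : D2 = 0) by (unfold D2; lra).
  assert (ZD3 : D3 = 0) by (unfold D3; lra).
  assert (ZNw : Nw' = 0) by (unfold Nw'; lra).
  assert (ZNz : Nz' = 0) by (unfold Nz'; lra).
  set (l1 := u1*x1 + u2*x2 + v1*y1 + v2*y2). set (l2 := -u1*x2 + u2*x1 - v1*y2 + v2*y1).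
  assert (A : l1*x1 - l2*x2 - u1 = u1*D3+v1*D1+v2*D2+u1*Nw') by (unfold l1,l2,D1,D2,D3,Nw'; ring).
  assert (B : l1*x2 + l2*x1 - u2 = u2*D3+v2*D1-v1*D2+u2*Nw') by (unfold l1,l2,D1,D2,D3,Nw'; ring).
  assert (C' : l1*y1 - l2*y2 - v1 = u1*D1 - u2*D2 + v1*(Nz'-Nw'-D3) + v1*Nw')
    by (unfold l1,l2,D1,D2,D3,Nw',Nz'; ring).
  assert (D : l1*y2 + l2*y1 - v2 = u2*D1 + u1*D2 + v2*(Nz'-Nw'-D3) + v2*Nw')
    by (unfold l1,l2,D1,D2,D3,Nw',Nz'; ring).
  rewrite ZD1, ZD2, ZD3, ZNw in A, B. rewrite ZD1, ZD2, ZD3, ZNw, ZNz in C', D.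
  clearbody l1 l2 D1 D2 D3 Nw' Nz'.
  assert (Nl : l1*l1 + l2*l2 = 1).
  { transitivity ((l1*l1+l2*l2)*(x1*x1+x2*x2+y1*y1+y2*y2)); [rewrite Nz; ring|].
    transitivity ((l1*x1 - l2*x2)*(l1*x1 - l2*x2) + (l1*x2 + l2*x1)*(l1*x2 + l2*x1)
      + (l1*y1 - l2*y2)*(l1*y1 - l2*y2) + (l1*y2 + l2*y1)*(l1*y2 + l2*y1)); [ring|].
    replace (l1*x1 - l2*x2) with u1 by lra. replace (l1*x2 + l2*x1) with u2 by lra.
    replace (l1*y1 - l2*y2) with v1 by lra. replace (l1*y2 + l2*y1) with v2 by lra. lra. }
  destruct (arg_exists l1 l2 Nl) as [t [Ct St]].
  exists t. cunf. rewrite Ct, St. peq; lra.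
Qed.

Lemma rot_inj s t z : nrm z = 1 -> rotC2 s z = rotC2 t z -> cos s = cos t /\ sin s = sin t.
Proof.
  destruct z as [[x1 x2] [y1 y2]]. unfold nrm. intros N E. cunf.
  apply pair_equal_spec in E as [E E']. apply pair_equal_spec in E as [E1 E2].
  apply pair_equal_spec in E' as [E3 E4].
  set (p := cos s - cos t). set (q := sin s - sin t).
  assert (F1 : p*x1 - q*x2 = 0) by (unfold p, q; lra).
  assert (F2 : p*x2 + q*x1 = 0) by (unfold p, q; lra).
  assert (F3 : p*y1 - q*y2 = 0) by (unfold p, q; lra).
  assert (F4 : p*y2 + q*y1 = 0) by (unfold p, q; lra).
  assert (Z : p*p + q*q = 0).
  { transitivity ((p*p+q*q)*(x1*x1+x2*x2+y1*y1+y2*y2)); [rewrite N; ring|].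
    transitivity ((p*x1 - q*x2)*(p*x1 - q*x2) + (p*x2 + q*x1)*(p*x2 + q*x1)
      + (p*y1 - q*y2)*(p*y1 - q*y2) + (p*y2 + q*y1)*(p*y2 + q*y1)); [ring|].
    rewrite F1, F2, F3, F4. ring. }
  assert (p = 0) by nra. assert (q = 0) by nra. unfold p, q in *. split; lra.
Qed.

Lemma sign4 a1 a2 a3 a4 b1 b2 b3 b4 :
  a1*a1 + a2*a2 + a3*a3 + a4*a4 = 1 ->
  a1*a1 = b1*b1 -> a2*a2 = b2*b2 -> a3*a3 = b3*b3 -> a4*a4 = b4*b4 ->
  a1*a2 = b1*b2 -> a1*a3 = b1*b3 -> a1*a4 = b1*b4 ->
  a2*a3 = b2*b3 -> a2*a4 = b2*b4 -> a3*a4 = b3*b4 ->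
  (b1 = a1 /\ b2 = a2 /\ b3 = a3 /\ b4 = a4) \/
  (b1 = - a1 /\ b2 = - a2 /\ b3 = - a3 /\ b4 = - a4).
Proof.
  intros N H11 H22 H33 H44 H12 H13 H14 H23 H24 H34.
  assert (sq : forall x y, x*x = y*y -> y = x \/ y = -x).
  { intros x y E. assert ((y - x) * (y + x) = 0) by lra.
    destruct (Rmult_integral _ _ H) as [H'|H']; [left|right]; lra. }
  assert (cn : forall a x y, a <> 0 -> a * x = a * y -> x = y).
  { intros a x y Ha E. apply (Rmult_eq_reg_l a); auto. }
  destruct (Req_dec a1 0) as [Z1|Z1]; [destruct (Req_dec a2 0) as [Z2|Z2];
    [destruct (Req_dec a3 0) as [Z3|Z3]; [destruct (Req_dec a4 0) as [Z4|Z4]|]|]|].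
  - exfalso. subst. lra.
  - destruct (sq _ _ H44) as [->| ->]; [left|right]; repeat split; try assumption;
      apply (cn a4); lra.
  - destruct (sq _ _ H33) as [->| ->]; [left|right]; repeat split; try assumption;
      apply (cn a3); lra.
  - destruct (sq _ _ H22) as [->| ->]; [left|right]; repeat split; try assumption;
      apply (cn a2); lra.
  - destruct (sq _ _ H11) as [->| ->]; [left|right]; repeat split; try assumption;
      apply (cn a1); lra.
Qed.

Lemma P_inj g h : SU2 g -> SU2 h -> P g = P h -> h = g \/ h = mat_mul mneg g.
Proof.
  intros Hg Hh E.
  destruct (SU2_form g Hg) as (a1 & a2 & b1 & b2 & -> & N).
  destruct (SU2_form h Hh) as (c1 & c2 & d1 & d2 & -> & N').
  pose proof (f_equal (fun F => F (1,0,0)) E) as E1.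
  pose proof (f_equal (fun F => F (0,1,0)) E) as E2.
  pose proof (f_equal (fun F => F (0,0,1)) E) as E3.
  clear E. cbv beta in E1, E2, E3. cunf.
  repeat match goal with H : (_, _) = (_, _) |- _ => apply pair_equal_spec in H; destruct H end.
  destruct (sign4 a1 a2 b1 b2 c1 c2 d1 d2 N) as [(-> & -> & -> & ->)|(-> & -> & -> & ->)];
    try lra.
  - left; reflexivity.
  - right. unfold mneg. cunf. peq; ring.
Qed.

Lemma P_neg g : P (mat_mul mneg g) = P g.
Proof.
  apply functional_extensionality. intros [[x1 x2] x3].
  destruct g as [[[a1 a2] [b1 b2]] [[c1 c2] [d1 d2]]]. unfold mneg. cunf. peq; ring.
Qed.

Lemma mneg_SU2 : SU2 mneg.
Proof. unfold mneg, SU2. cunf. split; peq; ring. Qed.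

Lemma mneg_neg g : mat_mul mneg (mat_mul mneg g) = g.
Proof. destruct g as [[[a1 a2] [b1 b2]] [[c1 c2] [d1 d2]]]. unfold mneg. cunf. peq; ring. Qed.

Lemma mneg_neq g : SU2 g -> mat_mul mneg g <> g.
Proof.
  intros H E. destruct (SU2_form g H) as (a1 & a2 & b1 & b2 & -> & N).
  unfold mneg in E. cunf.
  repeat match goal with H : (_, _) = (_, _) |- _ => apply pair_equal_spec in H; destruct H end.
  nra.
Qed.

Lemma mneg_neq_id : mneg <> mat_id.
Proof. unfold mneg, mat_id, RtoC. intro E. apply pair_equal_spec in E as [E _].
  apply pair_equal_spec in E as [E _]. apply pair_equal_spec in E as [E _]. lra. Qed.

Lemma mul_id_r g : mat_mul g mat_id = g.
Proof. destruct g as [[[a1 a2] [b1 b2]] [[c1 c2] [d1 d2]]]. cunf. peq; ring. Qed.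

Lemma selfadj g : SU2 g -> mat_adj g = g -> g = mat_id \/ g = mneg.
Proof.
  intros H E. destruct (SU2_form g H) as (a1 & a2 & b1 & b2 & -> & N).
  cunf.
  repeat match goal with H : (_, _) = (_, _) |- _ => apply pair_equal_spec in H; destruct H end.
  assert (a2 = 0) by lra. assert (b1 = 0) by lra. assert (b2 = 0) by lra. subst.
  assert (Ha : a1 = 1 \/ a1 = -1) by (assert (Hq : (a1 - 1) * (a1 + 1) = 0) by lra;
    destruct (Rmult_integral _ _ Hq); [left|right]; lra).
  destruct Ha; subst; [left|right]; unfold mneg; cunf; peq; lra.
Qed.

Lemma adj_mul_l g : SU2 g -> mat_mul (mat_adj g) g = mat_id.
Proof. intros [H _]. exact H. Qed.

Lemma G_SU2 G g : finite_subgroup_SU2 G -> G g -> SU2 g.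
Proof. intros (H & _) Hg. auto. Qed.

Lemma G_adj G g : finite_subgroup_SU2 G -> G g -> G (mat_adj g).
Proof.
  intros HG Hg. pose proof HG as (HS & Hid & Hmul & Hinv & _).
  destruct (Hinv g Hg) as (h & Hh & E).
  replace (mat_adj g) with h; auto.
  rewrite <- (mul_id_l h), <- (adj_mul_l g) by auto.
  rewrite mul_assoc, E. apply mul_id_r.
Qed.


Lemma card_ext {T : Type} (A B : T -> Prop) n : (forall x, A x <-> B x) -> card_is A n -> card_is B n.
Proof.
  intros E (l & Hn & Hm & Hl). exists l. split; [|split; [intro x; split|]]; auto.
  - intro. apply Hm, E; auto.
  - intro. apply E, Hm; auto.
Qed.

Lemma card_unique {T : Type} (A : T -> Prop) n m : card_is A n -> card_is A m -> n = m.
Proof.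
  intros (l & Hn & Hm & Hl) (l' & Hn' & Hm' & Hl'). subst.
  apply Nat.le_antisymm; apply NoDup_incl_length; auto; intros x Hx.
  - apply Hm', Hm, Hx.
  - apply Hm, Hm', Hx.
Qed.

Lemma card_0 {T : Type} (A : T -> Prop) x : card_is A 0 -> ~ A x.
Proof.
  intros (l & Hn & Hm & Hl) Hx. destruct l; [|discriminate]. apply Hm in Hx. destruct Hx.
Qed.

Lemma card_empty {T : Type} : card_is (fun _ : T => False) 0.
Proof. exists nil. split; [constructor|split; [intro x; split; intros []|reflexivity]]. Qed.

Lemma card_remove {T : Type} (A : T -> Prop) n x : card_is A n -> A x ->
  exists n', n = S n' /\ card_is (fun y => A y /\ y <> x) n'.
Proof.
  intros (l & Hn & Hm & Hl) Hx.
  apply Hm in Hx. destruct (in_split x l Hx) as (l1 & l2 & ->).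
  exists (length (l1 ++ l2)). split.
  - rewrite <- Hl, !length_app. simpl. lia.
  - exists (l1 ++ l2). split; [|split; [|reflexivity]].
    + eapply NoDup_remove_1; eauto.
    + pose proof (NoDup_remove_2 _ _ _ Hn) as Hni. intro y. split.
      * intros [Hy Hyx]. apply Hm in Hy. apply in_app_or in Hy as [H|[H|H]]; apply in_or_app; auto.
        congruence.
      * intro H. split.
        -- apply Hm. apply in_app_or in H as [H|H]; apply in_or_app; simpl; auto.
        -- intro E; subst. contradiction.
Qed.

Lemma card_add {T : Type} (A : T -> Prop) n y : card_is A n -> ~ A y ->
  card_is (fun x => A x \/ x = y) (S n).
Proof.
  intros (l & Hn & Hm & Hl) Hy. exists (y :: l). split; [|split].
  - constructor; auto. intro H. apply Hy, Hm, H.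
  - intro x. split.
    + intros [H|H]; [right; apply Hm; auto| left; auto].
    + intros [H|H]; [right; auto | left; apply Hm; auto].
  - simpl; lia.
Qed.

Lemma card_image_inj {T : Type} {U : Type} (A : T -> Prop) (F : T -> U) n :
  card_is A n -> (forall a a', A a -> A a' -> F a = F a' -> a = a') ->
  card_is (fun b => exists a, A a /\ F a = b) n.
Proof.
  intros (l & Hn & Hm & Hl) Hi. exists (map F l). split; [|split; [intro b; split|]].
  - assert (Hs : forall x, In x l -> A x) by (intros; apply Hm; auto).
    clear Hm Hl. induction l as [|a l IH]; simpl; constructor.
    + intro H. apply in_map_iff in H as (a' & E & Ha').
      inversion Hn; subst. apply Hi in E; simpl in *; auto. subst; contradiction.
    + inversion Hn; subst. apply IH; auto. intros; apply Hs; simpl; auto.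
  - intros (a & Ha & <-). apply in_map, Hm, Ha.
  - intro H. apply in_map_iff in H as (a & <- & Ha). exists a; split; auto. apply Hm; auto.
  - rewrite length_map; auto.
Qed.

Lemma card_range N : card_is (fun j => (j < N)%nat) N.
Proof.
  exists (seq 0 N). split; [|split; [intro j; split|]].
  - apply seq_NoDup.
  - intro H. apply in_seq. lia.
  - intro H. apply in_seq in H. lia.
  - apply length_seq.
Qed.

Lemma two_to_one {T : Type} {U : Type} (F : T -> U) (s : T -> T) : forall n (A : T -> Prop),
  card_is A n -> (forall a, A a -> A (s a)) -> (forall a, A a -> s a <> a) ->
  (forall a a', A a -> A a' -> (F a = F a' <-> a' = a \/ a' = s a)) ->
  exists m, card_is (fun b => exists a, A a /\ F a = b) m /\ n = (2 * m)%nat.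
Proof.
  intro n. induction n as [n IH] using lt_wf_ind. intros A HA Hs Hf HF.
  destruct n as [|n].
  - exists 0%nat. split; [|lia]. eapply card_ext; [|apply card_empty].
    intro b; split; [intros []|]. intros (a & Ha & _). eapply card_0; eauto.
  - destruct HA as (l & Hn & Hm & Hl) eqn:HAe.
    destruct l as [|x l]; [discriminate|].
    assert (Ax : A x) by (apply Hm; simpl; auto).
    destruct (card_remove A (S n) x HA Ax) as (n1 & E1 & HA1).
    assert (A1s : (fun y => A y /\ y <> x) (s x)) by (split; auto).
    destruct (card_remove _ n1 (s x) HA1 A1s) as (n2 & E2 & HA2).
    assert (Fsx : F (s x) = F x) by (symmetry; apply HF; auto).
    assert (Fs : forall a, A a -> F (s a) = F a) by (intros; symmetry; apply HF; auto).
    destruct (IH n2 ltac:(lia) (fun y => (A y /\ y <> x) /\ y <> s x) HA2) as (m & Hm2 & Em).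
    + intros a [[Ha Hax] Hasx].
      assert (K : F a <> F x).
      { intro E. symmetry in E. apply (HF x a) in E; auto. destruct E; subst; congruence. }
      split; [split|].
      * auto.
      * intro E. apply K. rewrite <- (Fs a Ha), E. reflexivity.
      * intro E. apply K. rewrite <- (Fs a Ha), E, Fsx. reflexivity.
    + intros a [[Ha _] _]; auto.
    + intros a a' [[Ha _] _] [[Ha' _] _]; auto.
    + exists (S m). split; [|lia].
      eapply card_ext; [|apply (card_add _ m (F x) Hm2)].
      * intro b. split.
        -- intros [(a & [[Ha Hax] Hasx] & <-)| ->]; eauto.
        -- intros (a & Ha & <-).
           destruct (classic (a = x \/ a = s x)) as [[->| ->]|Hn'].
           ++ right; auto.
           ++ right; auto.
           ++ left. exists a. repeat split; auto.
      * intros (a & [[Ha Hax] Hasx] & E).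
        symmetry in E. apply (HF x a) in E; auto. destruct E; congruence.
Qed.

Lemma invol_even {T : Type} (s : T -> T) n (A : T -> Prop) :
  card_is A n -> (forall a, A a -> A (s a)) -> (forall a, A a -> s (s a) = a) ->
  (forall a, A a -> s a <> a) -> Nat.even n = true.
Proof.
  intros HA Hs Hss Hf.
  destruct (two_to_one (fun a => fun y => y = a \/ y = s a) s n A HA Hs Hf) as (m & _ & ->).
  - intros a a' Ha Ha'. split.
    + intro E. assert (Hx : a = a \/ a = s a) by auto.
      pose proof (f_equal (fun P => P a) E) as E'. simpl in E'. rewrite E' in Hx.
      destruct Hx as [H|H]; [left; auto|right; rewrite H, Hss; auto].
    + intros [->| ->]; auto.
      apply functional_extensionality. intro y. apply propositional_extensionality.
      rewrite Hss; auto. tauto.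
  - rewrite Nat.even_mul. reflexivity.
Qed.


Lemma cos1 x : cos x = 1 -> exists k, x = IZR k * (2 * PI).
Proof.
  intro H. pose proof (cos_2a_sin (x / 2)) as E. replace (2 * (x/2)) with x in E by field.
  assert (sin (x/2) = 0) by nra.
  destruct (sin_eq_0_0 _ H0) as [k Hk]. exists k. lra.
Qed.

Lemma trig_eq s t : cos s = cos t -> sin s = sin t -> exists k, s - t = IZR k * (2 * PI).
Proof.
  intros Hc Hs. apply cos1. rewrite cos_minus, Hc, Hs.
  pose proof (sin2_cos2 t) as E. unfold Rsqr in E. lra.
Qed.

Lemma int_small k : Rabs (IZR k) < 1 -> k = 0%Z.
Proof.
  intro H. apply Rabs_def2 in H as [H1 H2].
  replace 1 with (IZR 1) in H1 by reflexivity. rewrite <- opp_IZR in H2.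
  apply lt_IZR in H1. apply lt_IZR in H2. lia.
Qed.

Lemma rot_int k w : rotC2 (IZR k * (2 * PI)) w = w.
Proof.
  assert (S : sin (IZR k * PI) = 0) by (apply sin_eq_0_1; exists k; reflexivity).
  assert (S2 : sin (IZR k * (2 * PI)) = 0) by (apply sin_eq_0_1; exists (2 * k)%Z; rewrite mult_IZR; ring).
  assert (C2' : cos (IZR k * (2 * PI)) = 1).
  { replace (IZR k * (2 * PI)) with (2 * (IZR k * PI)) by ring. rewrite cos_2a_sin, S. ring. }
  destruct w as [[x1 x2] [y1 y2]]. cunf. rewrite S2, C2'. peq; ring.
Qed.

Lemma rot_period t k w : rotC2 (t + IZR k * (2 * PI)) w = rotC2 t w.
Proof. rewrite <- rot_add, rot_int. reflexivity. Qed.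

Lemma min_exists {T : Type} (rel : T -> R -> Prop) (l : list T) : forall (S : R -> Prop),
  (forall t, S t -> exists x, In x l /\ rel x t) ->
  (forall x t t', rel x t -> rel x t' -> S t -> S t' -> t = t') ->
  (exists t, S t) -> exists d, S d /\ forall t, S t -> d <= t.
Proof.
  induction l as [|x l IH]; intros S Hc Hu [t0 Ht0].
  - destruct (Hc t0 Ht0) as (x & [] & _).
  - destruct (classic (exists t, S t /\ ~ rel x t)) as [Hex|Hno].
    + destruct (IH (fun t => S t /\ ~ rel x t)) as (d' & [Sd' Nd'] & Hd').
      * intros t [St Nt]. destruct (Hc t St) as (y & [<-|Hy] & Ry); [contradiction|eauto].
      * intros y t t' R1 R2 [S1 _] [S2 _]. eapply Hu; eauto.
      * exact Hex.
      * destruct (classic (exists tx, S tx /\ rel x tx)) as [(tx & Stx & Rtx)|Hnx].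
        -- exists (Rmin d' tx). split.
           ++ apply Rmin_case; auto.
           ++ intros t St. destruct (classic (rel x t)) as [Rt|Nt].
              ** rewrite (Hu x t tx Rt Rtx St Stx). apply Rmin_r.
              ** eapply Rle_trans; [apply Rmin_l|]. apply Hd'; auto.
        -- exists d'. split; auto. intros t St. destruct (classic (rel x t)) as [Rt|Nt].
           ++ exfalso. apply Hnx. eauto.
           ++ apply Hd'; auto.
    + exists t0. split; auto. intros t St.
      assert (R0 : rel x t0) by (apply NNPP; intro; apply Hno; eauto).
      assert (R1 : rel x t) by (apply NNPP; intro; apply Hno; eauto).
      rewrite (Hu x t0 t R0 R1 Ht0 St). apply Rle_refl.
Qed.


Definition Ang (G : Mat2 -> Prop) (z : C2) (t : R) : Prop := exists g, G g /\ mat_vec g z = rotC2 t z.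

Lemma Ang0 {G : Mat2 -> Prop} {z : C2} (HG : finite_subgroup_SU2 G) : Ang G z 0.
Proof. exists mat_id. destruct HG as (_ & Hid & _). split; auto. rewrite vec_id, rot0; auto. Qed.

Lemma Ang_add {G : Mat2 -> Prop} {z : C2} (HG : finite_subgroup_SU2 G) a b : Ang G z a -> Ang G z b -> Ang G z (a + b).
Proof.
  intros (g & Hg & Eg) (h & Hh & Eh). exists (mat_mul g h). destruct HG as (_ & _ & Hm & _).
  split; auto. rewrite vec_mul, Eh, vec_rot, Eg, rot_add, Rplus_comm. reflexivity.
Qed.

Lemma Ang_opp {G : Mat2 -> Prop} {z : C2} (HG : finite_subgroup_SU2 G) a : Ang G z a -> Ang G z (- a).
Proof.
  intros (g & Hg & Eg). exists (mat_adj g). split; [apply G_adj; auto|].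
  assert (E : mat_vec (mat_adj g) (mat_vec g z) = z).
  { rewrite <- vec_mul, adj_mul_l; [apply vec_id | eapply G_SU2; eauto]. }
  rewrite Eg, vec_rot in E. rewrite <- E at 2. rewrite rot_add.
  replace (-a + a) with 0 by ring. rewrite rot0. reflexivity.
Qed.

Lemma Ang_nat {G : Mat2 -> Prop} {z : C2} (HG : finite_subgroup_SU2 G) n a : Ang G z a -> Ang G z (INR n * a).
Proof.
  intro H. induction n as [|n IH].
  - simpl. replace (0 * a) with 0 by ring. apply Ang0; auto.
  - rewrite S_INR. replace ((INR n + 1) * a) with (INR n * a + a) by ring. apply Ang_add; auto.
Qed.

Lemma Ang_int {G : Mat2 -> Prop} {z : C2} (HG : finite_subgroup_SU2 G) k a : Ang G z a -> Ang G z (IZR k * a).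
Proof.
  intro H. destruct (Z.le_gt_cases 0 k) as [Hk|Hk].
  - rewrite <- (Z2Nat.id k Hk), <- INR_IZR_INZ. apply Ang_nat; auto.
  - replace k with (- Z.of_nat (Z.to_nat (- k)))%Z by lia.
    rewrite opp_IZR, <- INR_IZR_INZ. replace (- INR (Z.to_nat (- k)) * a) with (- (INR (Z.to_nat (-k)) * a)) by ring.
    apply Ang_opp, Ang_nat; auto.
Qed.

Lemma Ang_2pi {G : Mat2 -> Prop} {z : C2} (HG : finite_subgroup_SU2 G) : Ang G z (2 * PI).
Proof.
  exists mat_id. destruct HG as (_ & Hid & _). split; auto. rewrite vec_id.
  replace (2 * PI) with (IZR 1 * (2 * PI)) by (simpl; ring). rewrite rot_int. reflexivity.
Qed.

Lemma angle_unique (G : Mat2 -> Prop) (z : C2) (HG : finite_subgroup_SU2 G) (Nz : nrm z = 1) g s t : G g -> mat_vec g z = rotC2 s z -> mat_vec g z = rotC2 t z ->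
  0 < s <= 2 * PI -> 0 < t <= 2 * PI -> s = t.
Proof.
  intros Hg Es Et Hs Ht. rewrite Es in Et. destruct (rot_inj _ _ _ Nz Et) as [Hc Hsn].
  destruct (trig_eq _ _ Hc Hsn) as [k Hk].
  assert (k = 0%Z).
  { apply int_small. pose proof PI_RGT_0. apply Rabs_def1.
    - apply (Rmult_lt_reg_r (2 * PI)); lra.
    - apply (Rmult_lt_reg_r (2 * PI)); lra. }
  subst. simpl in Hk. lra.
Qed.

Lemma delta_exists (G : Mat2 -> Prop) (z : C2) (HG : finite_subgroup_SU2 G) (Nz : nrm z = 1) : exists d, (0 < d <= 2 * PI /\ Ang G z d) /\
  forall t, (0 < t <= 2 * PI /\ Ang G z t) -> d <= t.
Proof.
  pose proof HG as (_ & _ & _ & _ & n & lG & _ & HlG & _).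
  apply (min_exists (fun g t => G g /\ mat_vec g z = rotC2 t z) lG).
  - intros t [_ (g & Hg & Eg)]. exists g. split; auto. apply HlG; auto.
  - intros g t t' [Hg E1] [_ E2] [S1 _] [S2 _]. eapply angle_unique; eauto.
  - exists (2 * PI). pose proof PI_RGT_0. split; [lra|apply Ang_2pi; auto].
Qed.

Definition Kz (G : Mat2 -> Prop) (z : C2) (g : Mat2) : Prop := G g /\ exists t, mat_vec g z = rotC2 t z.

Lemma main_angle (G : Mat2 -> Prop) (z : C2) (HG : finite_subgroup_SU2 G) (Nz : nrm z = 1) : exists N, (0 < N)%nat /\ card_is (Kz G z) N /\ Ang G z (2 * PI / INR N) /\
  forall t, Ang G z t -> 0 < t < 2 * PI / INR N -> False.
Proof.
  destruct (delta_exists G z HG Nz) as (d & [[Hd0 Hd2] Ad] & Hmin).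
  pose proof PI_RGT_0 as HPI.
  assert (Char : forall t, Ang G z t -> exists n, t = IZR n * d).
  { intros t At. set (k := Int_part (t / d)). destruct (base_Int_part (t / d)) as [B1 B2].
    fold k in B1, B2.
    set (r := t - IZR k * d).
    assert (Ar : Ang G z r).
    { unfold r. replace (t - IZR k * d) with (t + IZR (- k) * d) by (rewrite opp_IZR; ring).
      apply Ang_add; auto. apply Ang_int; auto. }
    assert (r0 : 0 <= r).
    { unfold r. apply (Rmult_le_compat_r d) in B1; [|lra].
      replace (t / d * d) with t in B1 by (field; lra). lra. }
    assert (r1 : r < d).
    { unfold r. assert (t / d < IZR k + 1) by lra.
      apply (Rmult_lt_compat_r d) in H; [|lra].
      replace (t / d * d) with t in H by (field; lra). lra. }
    destruct (Req_dec r 0) as [Z|NZ].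
    - exists k. unfold r in Z. lra.
    - exfalso. assert (d <= r) by (apply Hmin; repeat split; auto; lra). lra. }
  destruct (Char _ (Ang_2pi HG)) as [N0 HN0].
  assert (N0pos : (0 < N0)%Z).
  { apply lt_IZR. simpl. apply (Rmult_lt_reg_r d); lra. }
  set (N := Z.to_nat N0).
  assert (HN : INR N = IZR N0) by (unfold N; rewrite INR_IZR_INZ, Z2Nat.id; auto; lia).
  assert (Nd : INR N * d = 2 * PI) by (rewrite HN; lra).
  assert (Npos : 0 < INR N) by (rewrite HN; apply IZR_lt; auto).
  assert (dN : 2 * PI / INR N = d) by (rewrite <- Nd; field; lra).
  exists N. rewrite dN. split; [|split; [|split]].
  - apply INR_lt. simpl. auto.
  -
    assert (Ej : forall j : nat, exists g, G g /\ mat_vec g z = rotC2 (INR j * d) z)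
      by (intro j; apply Ang_nat; auto).
    set (gj := fun j => proj1_sig (constructive_indefinite_description _ (Ej j))).
    assert (Hgj : forall j, G (gj j) /\ mat_vec (gj j) z = rotC2 (INR j * d) z)
      by (intro j; unfold gj; destruct (constructive_indefinite_description _ (Ej j)); auto).
    eapply card_ext; [|apply (card_image_inj (fun j => (j < N)%nat) gj N (card_range N))].
    + intro g. split.
      * intros (j & Hj & <-). split; [apply Hgj|]. exists (INR j * d). apply Hgj.
      * intros [Hg [t Et]].
        assert (At : Ang G z t) by (exists g; auto).
        destruct (Char t At) as [n ->].
        set (j := Z.to_nat (n mod N0)).
        destruct (Z.mod_pos_bound n N0 N0pos) as [M1 M2].
        assert (Hjn : INR j = IZR (n mod N0)) by (unfold j; rewrite INR_IZR_INZ, Z2Nat.id; auto).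
        exists j. split.
        -- apply INR_lt. rewrite Hjn, HN. apply IZR_lt. auto.
        -- apply (free _ _ z); try (eapply G_SU2; eauto; apply Hgj); auto.
           destruct (Hgj j) as [_ ->]. rewrite Et.
           rewrite (Z.div_mod n N0) at 1 by lia.
           rewrite plus_IZR, mult_IZR, Hjn.
           replace ((IZR N0 * IZR (n / N0) + IZR (n mod N0)) * d)
             with (IZR (n mod N0) * d + IZR (n / N0) * (2 * PI)) by (rewrite <- HN, <- Nd; ring).
           symmetry; apply rot_period.
    + intros j j' Hj Hj' E.
      assert (E' : rotC2 (INR j * d) z = rotC2 (INR j' * d) z)
        by (destruct (Hgj j) as [_ <-]; destruct (Hgj j') as [_ <-]; rewrite E; auto).
      destruct (rot_inj _ _ _ Nz E') as [Hc Hs].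
      destruct (trig_eq _ _ Hc Hs) as [k Hk].
      rewrite <- Nd in Hk.
      assert (Hk' : INR j - INR j' = IZR k * INR N)
        by (apply (Rmult_eq_reg_r d); [|lra]; rewrite Rmult_minus_distr_r; rewrite Hk; ring).
      apply lt_INR in Hj. apply lt_INR in Hj'. pose proof (pos_INR j). pose proof (pos_INR j').
      assert (k = 0%Z).
      { apply int_small. apply Rabs_def1.
        - apply (Rmult_lt_reg_r (INR N)); lra.
        - apply (Rmult_lt_reg_r (INR N)); lra. }
      subst k. simpl in Hk'. apply INR_eq. lra.
  - exact Ad.
  - intros t At [T0 T1]. assert (d <= t) by (apply Hmin; repeat split; auto; lra). lra.
Qed.


Lemma mneg_rot w : mat_vec mneg w = rotC2 PI w.
Proof. destruct w as [[x1 x2] [y1 y2]]. unfold mneg. cunf. rewrite cos_PI, sin_PI. peq; ring. Qed.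

Lemma adj_vec g w : SU2 g -> mat_vec (mat_adj g) (mat_vec g w) = w.
Proof. intro H. rewrite <- vec_mul, adj_mul_l by auto. apply vec_id. Qed.

Lemma piG_eq G z a b : finite_subgroup_SU2 G ->
  (piG G (rotC2 a z) = piG G (rotC2 b z) <-> Ang G z (a - b)).
Proof.
  intro HG. pose proof HG as (HS & Hid & Hmul & _).
  split.
  - intro E. assert (H : piG G (rotC2 a z) (rotC2 a z)) by (exists mat_id; rewrite vec_id; auto).
    rewrite E in H. destruct H as (g & Hg & Eg). exists g. split; auto.
    rewrite vec_rot in Eg.
    apply (f_equal (rotC2 (- b))) in Eg. rewrite !rot_add in Eg.
    replace (-b + b) with 0 in Eg by ring. rewrite rot0 in Eg. rewrite <- Eg.
    replace (a - b) with (-b + a) by ring. reflexivity.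
  - intros (g & Hg & Eg).
    assert (Ea : rotC2 a z = mat_vec g (rotC2 b z)).
    { rewrite vec_rot, Eg, rot_add. f_equal. ring. }
    apply functional_extensionality. intro w. apply propositional_extensionality.
    unfold piG. split.
    + intros (h & Hh & ->). exists (mat_mul h g). split; auto. rewrite Ea, vec_mul. reflexivity.
    + intros (h & Hh & ->). exists (mat_mul h (mat_adj g)). split; [apply Hmul; auto; apply G_adj; auto|].
      rewrite vec_mul, Ea, adj_vec; auto.
Qed.

Lemma K_iff G z g : finite_subgroup_SU2 G -> nrm z = 1 -> G g ->
  (P g (hopf z) = hopf z <-> Kz G z g).
Proof.
  intros HG Nz Hg. assert (Sg : SU2 g) by (eapply G_SU2; eauto).
  rewrite hopf_H by auto. rewrite P_hopfH by auto. split.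
  - intro E. split; auto. apply hopf_inj; auto. rewrite nrm_pres; auto.
  - intros [_ [t Et]]. rewrite Et. apply hopfH_rot.
Qed.

Lemma parity G nG : finite_subgroup_SU2 G -> card_is G nG ->
  (Nat.even nG = true <-> G mneg).
Proof.
  intros HG HnG. pose proof HG as (HS & Hid & Hmul & _). split.
  - intro Hev. apply NNPP. intro Hn.
    destruct (card_remove G nG mat_id HnG Hid) as (n' & -> & HA).
    assert (Ev : Nat.even n' = true).
    { apply (invol_even mat_adj n' _ HA).
      - intros a [Ha Hai]. split; [apply G_adj; auto|].
        intro E. apply Hai. rewrite <- (adj_adj a), E. unfold mat_id, mat_adj, Cconj, RtoC. simpl.
        repeat f_equal; ring.
      - intros a _. apply adj_adj.
      - intros a [Ha Hai] E. destruct (selfadj a (HS a Ha) E) as [->| ->]; auto. }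
    rewrite Nat.even_succ, <- Nat.negb_even, Ev in Hev. discriminate.
  - intro Hm.
    destruct (two_to_one P (mat_mul mneg) nG G HnG) as (m & _ & ->).
    + intros; auto.
    + intros a Ha. apply mneg_neq; auto.
    + intros a a' Ha Ha'. split.
      * intro E. apply P_inj; auto.
      * intros [-> | ->]; [reflexivity| rewrite P_neg; reflexivity].
    + rewrite Nat.even_mul. reflexivity.
Qed.

Lemma count_K G z nG hp N : finite_subgroup_SU2 G -> nrm z = 1 -> card_is G nG ->
  card_is (isotropy G (hopf z)) hp -> card_is (Kz G z) N ->
  N = (if Nat.even nG then (2 * hp)%nat else hp).
Proof.
  intros HG Nz HnG Hiso HK. pose proof HG as (HS & Hid & Hmul & _).
  assert (Iso : forall r, isotropy G (hopf z) r <-> exists g, Kz G z g /\ P g = r).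
  { intro r. split.
    - intros (g & Hg & -> & E). exists g. split; auto. apply (K_iff G z g HG Nz Hg); auto.
    - intros (g & Kg & <-). pose proof Kg as [Hg _]. exists g.
      split; [auto|split; [reflexivity|]]. apply (K_iff G z g HG Nz Hg). exact Kg. }
  destruct (Nat.even nG) eqn:Ev.
  - apply (parity G nG HG HnG) in Ev.
    destruct (two_to_one P (mat_mul mneg) N (Kz G z) HK) as (m & Hm & ->).
    + intros a [Ha [t Et]]. split; auto. exists (t + PI).
      rewrite vec_mul, Et, mneg_rot, rot_add. f_equal; ring.
    + intros a [Ha _]. apply mneg_neq; auto.
    + intros a a' [Ha _] [Ha' _]. split.
      * intro E. apply P_inj; auto.
      * intros [-> | ->]; [reflexivity| rewrite P_neg; reflexivity].
    + f_equal. eapply card_unique; [|exact Hiso].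
      eapply card_ext; [|exact Hm]. intro r. rewrite Iso. tauto.
  - assert (Hn : ~ G mneg) by (intro Hm; apply (parity G nG HG HnG) in Hm; congruence).
    pose proof (card_image_inj (Kz G z) P N HK) as HI.
    eapply card_unique; [apply HI|].
    + intros a a' [Ha _] [Ha' _] E.
      destruct (P_inj a a' (HS a Ha) (HS a' Ha') E) as [->| E']; auto.
      exfalso. apply Hn.
      replace mneg with (mat_mul a' (mat_adj a)).
      * apply Hmul; auto. apply G_adj; auto.
      * rewrite E', mul_assoc, mul_adj_r, mul_id_r; auto.
    + eapply card_ext; [|exact Hiso]. intro r. rewrite Iso. tauto.
Qed.

Theorem lemma3p14 :
  forall (G : Mat2 -> Prop) (nG : nat) (f : R3 -> R),
    finite_subgroup_SU2 G ->
    card_is G nG -> (nG > 1)%nat ->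
    (* f is H-invariant *)
    (forall g q, G g -> sphere2 q -> f (P g q) = f q) ->
    (* the critical set of f equals Fix(H) *)
    (forall q, sphere2 q -> (sphere_critical f q <-> FixH G q)) ->
    exists eps0 : R, eps0 > 0 /\
    forall eps : R, 0 < eps < eps0 ->
    forall (p : R3) (z : C2) (hp : nat),
      sphere_critical f p ->
      cunit_sphere z -> hopf z = p ->
      card_is (isotropy G p) hp ->
      let c := 1 + eps * f p in
      multiplicity (fun t => piG G (rotC2 (t / c) z)) (2 * PI * c)
        (if Nat.even nG then (2 * hp)%nat else hp).
Proof.
  intros G nG f HG HnG _ _ _. exists 1. split; [lra|].
  intros eps _ p z hp _ Hz Hp Hiso c.
  assert (Nz : nrm z = 1) by (apply unit_nrm; auto).
  destruct (main_angle G z HG Nz) as (N & Npos & HK & Ad & Amin).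
  subst p. rewrite <- (count_K G z nG hp N HG Nz HnG Hiso HK).
  apply lt_INR in Npos. simpl in Npos.
  pose proof PI_RGT_0 as HPI.
  split; [|split].
  - apply INR_lt. simpl. auto.
  - intro t. destruct (Req_dec c 0) as [C0|C0].
    + rewrite C0. replace (2 * PI * 0 / INR N) with 0 by (field; lra). rewrite Rplus_0_r. reflexivity.
    + apply piG_eq; auto.
      replace ((t + 2 * PI * c / INR N) / c - t / c) with (2 * PI / INR N) by (field; lra).
      exact Ad.
  - intros s t Hs Ht E.
    destruct (Rle_or_lt c 0) as [Cn|Cp].
    + exfalso. assert (2 * PI * c / INR N <= 0).
      { unfold Rdiv. apply Rmult_le_0_r; [nra|]. left. apply Rinv_0_lt_compat; auto. }
      lra.
    + apply piG_eq in E; auto.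
      assert (B : Rabs (s / c - t / c) < 2 * PI / INR N).
      { replace (s / c - t / c) with ((s - t) / c) by (field; lra).
        rewrite Rabs_div by lra. rewrite (Rabs_right c) by lra.
        apply (Rmult_lt_reg_r c); auto. unfold Rdiv at 1. rewrite Rmult_assoc, Rinv_l, Rmult_1_r by lra.
        replace (2 * PI / INR N * c) with (2 * PI * c / INR N) by (field; lra).
        apply Rabs_def1; lra. }
      destruct (Rtotal_order (s / c - t / c) 0) as [L|[Z|L]].
      * exfalso. apply (Amin (- (s / c - t / c))).
        -- apply Ang_opp; auto.
        -- split; [lra|]. rewrite Rabs_left in B; lra.
      * apply (Rmult_eq_reg_r (/ c)); [|apply Rinv_neq_0_compat; lra]. unfold Rdiv in Z. lra.
      * exfalso. apply (Amin (s / c - t / c)); auto.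
        split; [lra|]. rewrite Rabs_right in B; lra.
Qed.
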